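(* Let $F$ be a field of characteristic $0$, $d\ge1$, $k\le d^2$, and let $f(x_1,\dots,x_k)\in F\langle X\rangle^{\otimes n}$ be a tensor polynomial that is multilinear and antisymmetric in $x_1,\dots,x_k$. Define the tensor polynomial in $d^2$ variables $$\Phi(x_1,\dots,x_{d^2}):=Alt_{x_1,\dots,x_{d^2}}\big(f(x_1,\dots,x_k)\otimes x_{k+1}\otimes x_{k+2}\otimes\cdots\otimes x_{d^2}\big)\in F\langle X\rangle^{\otimes(n+d^2-k)}.$$ Then $f$ is not identically zero when evaluated on $d\times d$ matrices $M_d(F)$ if and only if $\Phi$ is not identically zero when evaluated on $M_d(F)$.
   Context: $F\langle X\rangle$ is the free associative algebra in $x_1,x_2,\dots$; tensor polynomials are evaluated on matrices via the algebra homomorphism induced by $x_i\mapsto A_i\in M_d(F)$. $Alt_{x_1,\dots,x_m}G:=\sum_{\sigma\in S_m}\epsilon_\sigma G(x_{\sigma(1)},\dots,x_{\sigma(m)})$. *)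

(* Defs.v *)
(* Tensor polynomials over F<X> = F<x_0, x_1, ...> (0-indexed variables). *)
From HB Require Import structures.
From mathcomp Require Import all_boot all_order all_algebra all_fingroup.
From mathcomp Require Import finmap.
From mathcomp.multinomials Require Import monalg.

Set Implicit Arguments.
Unset Strict Implicit.
Unset Printing Implicit Defensive.

Import GRing.Theory.
Local Open Scope ring_scope.

(* A word (monomial of F<X>): the sequence of variable indices, [:: i1; ...; il]
   stands for x_{i1} x_{i2} ... x_{il}.  Words form a basis of F<X>. *)
Definition word := seq nat.

(* F<X>^{(x) n}: the free F-module on the basis of n-tuples of words
   (tensor products of basis monomials). *)
Definition tpoly (F : nzRingType) (n : nat) := {malg F[n.-tuple word]}.

Definition eval_word (F : nzRingType) (d : nat) (A : nat -> 'M[F]_d) (w : word)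
  : 'M[F]_d := foldr (fun x M => A x *m M) 1%:M w.

(* M_d(F)^{(x) n} is identified with F^{(I_d x I_d)^n}: the pure tensor
   M_1 (x) ... (x) M_n corresponds to  ij |-> prod_t M_t (ij t).1 (ij t).2. *)
Definition eval_tpoly (F : nzRingType) (n d : nat) (A : nat -> 'M[F]_d)
  (p : tpoly F n) : {ffun {ffun 'I_n -> 'I_d * 'I_d} -> F} :=
  [ffun ij : {ffun 'I_n -> 'I_d * 'I_d} => \sum_(m <- msupp p)
       p@_m * \prod_(t < n) eval_word A (tnth m t) (ij t).1 (ij t).2].

(* p is multilinear in x_0..x_{k-1} and involves only these variables:
   every monomial contains each x_i (i < k) exactly once and nothing else. *)
Definition multilinear_in (F : nzRingType) (n k : nat) (p : tpoly F n) : Prop :=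
  forall m : n.-tuple word, m \in msupp p -> perm_eq (flatten m) (iota 0 k).

Definition tp_rename (F : nzRingType) (n : nat) (g : nat -> nat) (p : tpoly F n)
  : tpoly F n :=
  \sum_(m <- msupp p) << p@_m *g map_tuple (map g) m >>.

Definition perm_ext (k : nat) (s : 'S_k) (i : nat) : nat :=
  if (insub i : option 'I_k) is Some j then nat_of_ord (s j) else i.

Definition antisymmetric_in (F : nzRingType) (n k : nat) (p : tpoly F n) : Prop :=
  forall s : 'S_k, tp_rename (perm_ext s) p = (-1) ^+ odd_perm s *: p.

Definition tp_Alt (F : nzRingType) (n N : nat) (p : tpoly F n) : tpoly F n :=
  \sum_(s : 'S_N) (-1) ^+ odd_perm s *: tp_rename (perm_ext s) p.

Definition tp_tensor_vars (F : nzRingType) (n k r : nat) (p : tpoly F n)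
  : tpoly F (n + r) :=
  \sum_(m <- msupp p)
     << p@_m *g cat_tuple m (mktuple (fun j : 'I_r => [:: (k + j)%N])) >>.

Definition Phi (F : nzRingType) (n d k : nat) (f : tpoly F n)
  : tpoly F (n + (d ^ 2 - k)) :=
  tp_Alt (d ^ 2) (tp_tensor_vars k (d ^ 2 - k) f).

Definition nonvanishing_on (F : nzRingType) (n d : nat) (p : tpoly F n) : Prop :=
  exists A : nat -> 'M[F]_d, eval_tpoly A p != 0.

(* Main.v *)
Require Import Defs.
From HB Require Import structures.
From mathcomp Require Import all_boot all_order all_algebra all_fingroup.
From mathcomp Require Import finmap.
From mathcomp.multinomials Require Import monalg.
From mathcomp Require Import zify.
Set Implicit Arguments.
Unset Strict Implicit.
Unset Printing Implicit Defensive.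


Lemma perm_ext_lt N (s : 'S_N) x (H : (x < N)%N) : perm_ext s x = s (Ordinal H).
Proof. by rewrite /perm_ext insubT. Qed.

Lemma perm_ext_ge N (s : 'S_N) x : (N <= x)%N -> perm_ext s x = x.
Proof. by move=> H; rewrite /perm_ext insubF // ltnNge H. Qed.

Lemma perm_ext_ord N (s : 'S_N) (i : 'I_N) : perm_ext s i = s i.
Proof. by rewrite (perm_ext_lt s (ltn_ord i)); congr (nat_of_ord (s _)); apply: val_inj. Qed.

Section Ext.
Local Open Scope group_scope.
Variables (k N : nat) (le : (k <= N)%N).

Definition ext_fun (s : 'S_k) (i : 'I_N) : 'I_N :=
  if (insub (val i) : option 'I_k) is Some j then widen_ord le (s j) else i.

Lemma ext_fun_val s i : val (ext_fun s i) = perm_ext s i.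
Proof. by rewrite /ext_fun /perm_ext; case: insub. Qed.

Lemma ext_fun_inj s : injective (ext_fun s).
Proof.
move=> i1 i2 /(congr1 val); rewrite !ext_fun_val => E; apply: val_inj => /=.
move: E; rewrite /perm_ext.
case: insubP => [j1 _ v1|n1]; case: insubP => [j2 _ v2|n2] //.
- by move/val_inj/perm_inj => e; rewrite -v1 -v2 e.
- by move=> e; move: n2; rewrite -e ltn_ord.
- by move=> e; move: n1; rewrite e ltn_ord.
Qed.

Definition ext (s : 'S_k) : 'S_N := perm (@ext_fun_inj s).

Lemma ext_val s i : val (ext s i) = perm_ext s i.
Proof. by rewrite permE ext_fun_val. Qed.

Lemma perm_ext_ext s x : perm_ext (ext s) x = perm_ext s x.
Proof.
case: (ltnP x N) => xN; first by rewrite (perm_ext_lt _ xN) ext_val.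
by rewrite !perm_ext_ge // (leq_trans le xN).
Qed.

Lemma ext_inj : injective ext.
Proof.
move=> s1 s2 E; apply/permP => i; apply: val_inj.
have := congr1 (fun s => perm_ext s i) E; rewrite /= !perm_ext_ext.
by rewrite !perm_ext_ord.
Qed.

Lemma ext_tperm (a b : 'I_k) :
  ext (tperm a b) = tperm (widen_ord le a) (widen_ord le b).
Proof.
apply/permP => i; apply: val_inj; rewrite ext_val.
case: (ltnP i k) => ik.
  rewrite (perm_ext_lt _ ik) !permE /=.
  have -> : (i == widen_ord le a) = (Ordinal ik == a) by [].
  have -> : (i == widen_ord le b) = (Ordinal ik == b) by [].
  by case: eqP => _ //=; case: eqP.
rewrite perm_ext_ge // tpermD //; apply/negP => /eqP e; move: ik; rewrite -e /= leqNgt ltn_ord //.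
Qed.

Lemma ext1 : ext 1 = 1.
Proof.
apply/permP => i; apply: val_inj; rewrite ext_val perm1 /perm_ext.
by case: insubP => // j _ vj; rewrite perm1.
Qed.

Lemma extM s t : ext (s * t) = ext s * ext t.
Proof.
apply/permP => i; apply: val_inj; rewrite permM !ext_val.
case: (ltnP i k) => ik; last by rewrite !perm_ext_ge.
rewrite (perm_ext_lt s ik) (perm_ext_lt _ ik) permM perm_ext_ord.
by do 2 congr (nat_of_ord (t _)); apply: val_inj.
Qed.

Lemma odd_ext s : odd_perm (ext s) = odd_perm s.
Proof.
have [ts -> dts] := prod_tpermP s.
rewrite (big_morph ext extM ext1).
under eq_bigr do rewrite ext_tperm.
rewrite -(big_map (fun t => (widen_ord le t.1, widen_ord le t.2)) xpredT
   (fun t => tperm t.1 t.2)).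
rewrite !odd_perm_prod ?size_map //.
by rewrite all_map; apply: sub_all dts => t /=.
Qed.

Definition fixes (s : 'S_N) := [forall j : 'I_(N - k), perm_ext s (k + j) == (k + j)%N].

Lemma fixes_ext s : fixes (ext s).
Proof. by apply/forallP => j; rewrite perm_ext_ext perm_ext_ge // leq_addr. Qed.

Lemma fixes_surj sg : fixes sg -> exists s, ext s = sg.
Proof.
move=> /forallP fx.
have small : forall i : 'I_k, (sg (widen_ord le i) < k)%N.
  move=> i; rewrite ltnNge; apply/negP => H.
  have jr : (sg (widen_ord le i) - k < N - k)%N.
    by have := ltn_ord (sg (widen_ord le i)); lia.
  have := fx (Ordinal jr); rewrite /= subnKC // => /eqP.
  rewrite -[X in perm_ext sg X]/(nat_of_ord (sg (widen_ord le i))) perm_ext_ord.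
  move/val_inj/perm_inj => e; move: H; rewrite e /=.
  by rewrite leqNgt ltn_ord.
pose rf (i : 'I_k) : 'I_k := Ordinal (small i).
have rinj : injective rf.
  by move=> i1 i2 /(congr1 val) /= /val_inj /perm_inj /(congr1 val) /= /val_inj.
exists (perm rinj); apply/permP => i; apply: val_inj; rewrite ext_val.
case: (ltnP i k) => ik.
  rewrite (perm_ext_lt _ ik) permE /=; congr (nat_of_ord (sg _)); exact: val_inj.
rewrite perm_ext_ge //.
have jr : (i - k < N - k)%N by have := ltn_ord i; lia.
have := fx (Ordinal jr); rewrite /= subnKC // => /eqP.
by rewrite perm_ext_ord.
Qed.

Lemma sum_fixes (R : nzRingType) (h : 'S_N -> R) :
  (\sum_(sg : 'S_N | fixes sg) h sg = \sum_(s : 'S_k) h (ext s))%R.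
Proof.
rewrite -(big_imset h (in2W ext_inj)) /=; apply: eq_bigl => sg.
apply/idP/imsetP => [/fixes_surj [s <-] | [s _ ->]]; last exact: fixes_ext.
by exists s.
Qed.

End Ext.

Import GRing.Theory.
Local Open Scope ring_scope.


Section Eval.
Variables (F : fieldType) (d : nat).
Implicit Types A : nat -> 'M[F]_d.

Definition Ev n (A : nat -> 'M[F]_d) (ij : {ffun 'I_n -> 'I_d * 'I_d})
  (m : n.-tuple word) : F :=
  \prod_(t < n) eval_word A (tnth m t) (ij t).1 (ij t).2.

Lemma evalE n A (p : tpoly F n) ij :
  eval_tpoly A p ij = mmap (@idfun F) (Ev A ij) p.
Proof. by rewrite ffunE mmapE. Qed.

Lemma evalU n A ij (c : F) (m : n.-tuple word) :
  eval_tpoly A (<< c *g m >> : tpoly F n) ij = c * Ev A ij m.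
Proof. by rewrite evalE mmapU. Qed.

Lemma evalD n A ij (p q : tpoly F n) :
  eval_tpoly A (p + q) ij = eval_tpoly A p ij + eval_tpoly A q ij.
Proof. by rewrite !evalE mmapD. Qed.

Lemma eval0 n A ij : eval_tpoly A (0 : tpoly F n) ij = 0.
Proof. by rewrite !evalE mmap0. Qed.

Lemma eval_sum n A ij I (r : seq I) (P : pred I) (G : I -> tpoly F n) :
  eval_tpoly A (\sum_(i <- r | P i) G i) ij = \sum_(i <- r | P i) eval_tpoly A (G i) ij.
Proof.
by apply: (big_morph (fun p => eval_tpoly A p ij)); [apply: evalD | apply: eval0].
Qed.

Lemma evalZ n A ij c (p : tpoly F n) :
  eval_tpoly A (c *: p) ij = c * eval_tpoly A p ij.
Proof.
rewrite !evalE (mmapEw (msuppZ_le _ _)) mmapE big_distrr /=.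
by apply: eq_bigr => m _; rewrite mcoeffZ mulrA.
Qed.

Lemma eval_word_map (A : nat -> 'M[F]_d) g w :
  eval_word A (map g w) = eval_word (A \o g) w.
Proof. by elim: w => //= x w IH; rewrite /eval_word /= -!/(eval_word _ _) IH. Qed.

Lemma eval_rename n g A (p : tpoly F n) ij :
  eval_tpoly A (tp_rename g p) ij = eval_tpoly (A \o g) p ij.
Proof.
rewrite /tp_rename eval_sum [RHS]evalE mmapE; apply: eq_bigr => m _.
rewrite evalU /Ev; congr (_ * _); apply: eq_bigr => t _.
by rewrite tnth_map eval_word_map.
Qed.

Lemma eval_tensor n k r A (p : tpoly F n) ij :
  eval_tpoly A (tp_tensor_vars k r p) ij =
  eval_tpoly A p [ffun t => ij (lshift r t)] *
  \prod_(j < r) A (k + j)%N (ij (rshift n j)).1 (ij (rshift n j)).2.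
Proof.
rewrite /tp_tensor_vars eval_sum [eval_tpoly A p _]evalE mmapE mulr_suml.
apply: eq_bigr => m _; rewrite evalU -mulrA; congr (_ * _).
rewrite /Ev big_split_ord /=; congr (_ * _).
  by apply: eq_bigr => t _; rewrite tnth_lshift ffunE.
apply: eq_bigr => j _; rewrite tnth_rshift tnth_mktuple.
by rewrite /eval_word /= mulmx1.
Qed.

Lemma eval_Phi n k A (f : tpoly F n) ij :
  eval_tpoly A (Phi d k f) ij =
  \sum_(s : 'S_(d ^ 2)) (-1) ^+ odd_perm s *
   (eval_tpoly (A \o perm_ext s) f [ffun t => ij (lshift (d ^ 2 - k) t)] *
    \prod_(j < d ^ 2 - k) A (perm_ext s (k + j)) (ij (rshift n j)).1 (ij (rshift n j)).2).
Proof.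
rewrite /Phi /tp_Alt eval_sum; apply: eq_bigr => s _.
by rewrite evalZ eval_rename eval_tensor.
Qed.


Lemma eval_word_ext A A' w :
  (forall x, x \in w -> A x = A' x) -> eval_word A w = eval_word A' w.
Proof.
elim: w => //= x w IH H; rewrite /eval_word /= -!/(eval_word _ _).
by rewrite H ?mem_head // IH // => y yw; apply: H; rewrite inE yw orbT.
Qed.

Lemma ml_lt n k (f : tpoly F n) m t x :
  multilinear_in k f -> m \in msupp f -> x \in tnth m t -> (x < k)%N.
Proof.
move=> ml mf xt; have := ml m mf => /perm_mem pm.
have : x \in flatten m by apply/flattenP; exists (tnth m t) => //; apply: mem_tnth.
by rewrite pm mem_iota.
Qed.

Lemma eval_ext_ml n k (f : tpoly F n) A A' :
  multilinear_in k f -> (forall i, (i < k)%N -> A i = A' i) ->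
  eval_tpoly A f = eval_tpoly A' f.
Proof.
move=> ml H; apply/ffunP => ij; rewrite !evalE !mmapE.
apply: eq_big_seq => m mf; congr (_ * _); apply: eq_bigr => t _.
by rewrite (@eval_word_ext A A') // => x xt; apply: H; apply: (ml_lt ml mf xt).
Qed.

Definition upd A j X : nat -> 'M[F]_d := fun i => if i == j then X else A i.

Lemma word_lin0 A j X w : j \notin w -> eval_word (upd A j X) w = eval_word A w.
Proof.
move=> jw; apply: eval_word_ext => x xw; rewrite /upd; case: eqP => // ex.
by rewrite -ex xw in jw.
Qed.

Lemma word_lin1 A j w a X Y : count_mem j w = 1%N ->
  eval_word (upd A j (a *: X + Y)) w =
  a *: eval_word (upd A j X) w + eval_word (upd A j Y) w.
Proof.
elim: w => //= x w IH; rewrite /eval_word /= -!/(eval_word _ _).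
case: (eqVneq x j) => [-> | nx] /=.
  rewrite add1n => -[] /count_memPn jw.
  by rewrite !word_lin0 // /upd eqxx mulmxDl scalemxAl.
rewrite add0n => /IH ->; rewrite /upd (negbTE nx).
by rewrite mulmxDr scalemxAr.
Qed.

Lemma Ev_def n A ij m : @Ev n A ij m = \prod_(t < n) eval_word A (tnth m t) (ij t).1 (ij t).2.
Proof. by []. Qed.

Lemma eval_lin n k (f : tpoly F n) A j ij a X Y :
  multilinear_in k f -> (j < k)%N ->
  eval_tpoly (upd A j (a *: X + Y)) f ij =
  a * eval_tpoly (upd A j X) f ij + eval_tpoly (upd A j Y) f ij.
Proof.
move=> ml jk; rewrite !evalE !mmapE mulr_sumr -big_split /=.
apply: eq_big_seq => m mf.
have cnt : (\sum_(t < n) count_mem j (tnth m t) = 1)%N.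
  have := ml m mf => /seq.permP /(_ (pred1 j)).
  rewrite count_flatten sumnE big_map big_tuple => ->.
  by rewrite count_uniq_mem ?iota_uniq // mem_iota add0n jk.
have [t0 t0P] : exists t0, count_mem j (tnth m t0) != 0%N.
  apply/existsP; apply: contraT; rewrite negb_exists => /forallP H.
  by move: cnt; rewrite big1 // => t _; apply/eqP; move: (H t); rewrite negbK.
move: cnt; rewrite (bigD1 t0) //= => cnt.
have key : forall c S : nat, c != 0%N -> (c + S = 1 -> c = 1 /\ S = 0)%N by lia.
have [c1 S0] := key _ _ t0P cnt.
have c0 : forall t, t != t0 -> j \notin tnth m t.
  move=> t tt0; apply/count_memPn; apply/eqP; move/eqP: S0.
  by rewrite sum_nat_eq0 => /forallP /(_ t); rewrite tt0.
have Es : forall B, Ev B ij m = eval_word B (tnth m t0) (ij t0).1 (ij t0).2 *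
    \prod_(t < n | t != t0) eval_word B (tnth m t) (ij t).1 (ij t).2.
  by move=> B; rewrite /Ev (bigD1 t0).
rewrite !Es word_lin1 // !mxE.
have E0 : forall Z, \prod_(t < n | t != t0)
    eval_word (upd A j Z) (tnth m t) (ij t).1 (ij t).2 =
   \prod_(t < n | t != t0) eval_word A (tnth m t) (ij t).1 (ij t).2.
  by move=> Z; apply: eq_bigr => t tt0; rewrite word_lin0 // c0.
by rewrite !E0 mulrDl mulrDr !mulrA [f@_m * a]mulrC.
Qed.

Lemma lin_sum (L : 'M[F]_d -> F) (I : finType) (a : I -> F) (X : I -> 'M[F]_d) :
  (forall c X Y, L (c *: X + Y) = c * L X + L Y) ->
  L (\sum_i a i *: X i) = \sum_i a i * L (X i).
Proof.
move=> H; have L0 : L 0 = 0.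
  have := H 1 0 0; rewrite scale1r addr0 mul1r.
  by move/(congr1 (fun x => x - L 0)); rewrite addrK subrr.
symmetry; apply: (big_rec2 (fun x y => x = L y)); first by rewrite L0.
by move=> i x y _ ->; rewrite H.
Qed.

End Eval.


Section Main.
Variables (F : fieldType) (d : nat).
Implicit Types A : nat -> 'M[F]_d.

Definition dl (u : 'I_d * 'I_d) : 'M[F]_d := delta_mx u.1 u.2.

Lemma dlE u v : dl u v.1 v.2 = (u == v)%:R.
Proof.
by rewrite /dl mxE; case: u v => [a b] [c e] /=; rewrite xpair_eqE eq_sym [e == b]eq_sym.
Qed.

Lemma reduce_units n k (f : tpoly F n) A ij : (0 < d)%N ->
  multilinear_in k f -> eval_tpoly A f ij != 0 ->
  exists c : nat -> 'I_d * 'I_d, eval_tpoly (fun i => dl (c i)) f ij != 0.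
Proof.
move=> d0 ml nz.
suff: forall j, (j <= k)%N -> exists c A', (forall i, (i < j)%N -> A' i = dl (c i))
    /\ eval_tpoly A' f ij != 0.
  case/(_ k (leqnn k)) => c [A' [HA nz']]; exists c.
  by rewrite -(eval_ext_ml (A := A') (A' := fun i => dl (c i)) ml HA).
elim => [_|j IH jk].
  by exists (fun _ => (Ordinal d0, Ordinal d0)), A; split.
have [c [A' [HA nz']]] := IH (ltnW jk).
pose L X := eval_tpoly (upd A' j X) f ij.
have LA : L (A' j) = eval_tpoly A' f ij.
  rewrite /L (eval_ext_ml (A := upd A' j (A' j)) (A' := A') ml) // => i _.
  by rewrite /upd; case: eqP => // ->.
have Lsum : L (A' j) = \sum_(u : 'I_d * 'I_d) A' j u.1 u.2 * L (dl u).
  rewrite {1}(matrix_sum_delta (A' j)) pair_big /=.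
  apply: (lin_sum (L := L)) => a X Y; exact: (@eval_lin F d n k f A' j ij a X Y ml jk).
have [u nzu] : exists u, A' j u.1 u.2 * L (dl u) != 0.
  apply/existsP; apply: contraT; rewrite negb_exists => /forallP H.
  move: nz'; rewrite -LA Lsum big1 ?eqxx // => u _; apply/eqP; move: (H u).
  by rewrite negbK.
move: nzu; rewrite mulf_eq0 negb_or => /andP [_ Lnz].
exists (fun i => if i == j then u else c i), (upd A' j (dl u)); split => //.
move=> i; rewrite ltnS leq_eqVlt; case/orP => [/eqP -> | ilt]; rewrite /upd.
  by rewrite eqxx.
by rewrite (ltn_eqF ilt) HA.
Qed.

Lemma noninj_zero n k (f : tpoly F n) (c : nat -> 'I_d * 'I_d) ij :
  [pchar F] =i pred0 -> multilinear_in k f -> antisymmetric_in k f ->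
  forall i1 i2 : 'I_k, i1 != i2 -> c i1 = c i2 ->
  eval_tpoly (fun i => dl (c i)) f ij = 0.
Proof.
move=> ch0 ml asf i1 i2 ne ce; set B := fun i => dl (c i).
have := congr1 (fun p => eval_tpoly B p ij) (asf (tperm i1 i2)).
rewrite /= eval_rename evalZ odd_tperm ne expr1 mulN1r.
rewrite (eval_ext_ml (A := B \o perm_ext (tperm i1 i2)) (A' := B) ml); last first.
  move=> i ik; rewrite /= (perm_ext_lt _ ik) /B.
  case: tpermP => [e|e|//]; rewrite -[i]/(nat_of_ord (Ordinal ik)) e ?ce //.
move=> /(congr1 (fun x => x + eval_tpoly B f ij)); rewrite addNr => /eqP.
rewrite -mulr2n -mulr_natl mulf_eq0 => /orP [|/eqP //].
by move/pcharf0P: ch0 => ->.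
Qed.

Lemma prod_bool (I : finType) (b : I -> bool) :
  \prod_(j : I) ((b j)%:R : F) = ([forall j, b j])%:R.
Proof.
case: (pickP (fun j => ~~ b j)) => [j nj | all].
  have -> : [forall j, b j] = false by apply/negbTE/forallPn; exists j.
  by rewrite (bigD1 j) //= (negbTE nj) mul0r.
have -> : [forall j, b j] by apply/forallP => j; have := all j => /negbFE.
by rewrite big1 // => j _; have := all j => /negbFE ->.
Qed.

End Main.


Lemma sum_neq0 (F : fieldType) (I : finType) (G : I -> F) :
  \sum_i G i != 0 -> exists i, G i != 0.
Proof.
move=> nz; apply/existsP; apply: contraT; rewrite negb_exists => /forallP H.
by move: nz; rewrite big1 ?eqxx // => i _; apply/eqP; move: (H i); rewrite negbK.
Qed.

Lemma ffun_neq0 (F : fieldType) (I : finType) (G : {ffun I -> F}) :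
  G != 0 -> exists i, G i != 0.
Proof.
move=> nz; apply/existsP; apply: contraT; rewrite negb_exists => /forallP H.
move: nz; apply: contraNT => _; apply/eqP/ffunP => i; rewrite ffunE.
by apply/eqP; move: (H i); rewrite negbK.
Qed.

Unset Implicit Arguments.
Set Strict Implicit.

Theorem mainTheorem8 (F : fieldType) (n d k : nat) (f : tpoly F n) :
  [pchar F] =i pred0 -> (0 < d)%N -> (k <= d ^ 2)%N ->
  multilinear_in k f -> antisymmetric_in k f ->
  (nonvanishing_on d f <-> nonvanishing_on d (Phi d k f)).
Proof.
move=> ch0 d0 kN ml asf; split; last first.
  case=> B /ffun_neq0 [ij]; rewrite eval_Phi => /sum_neq0 [sg].
  rewrite mulf_eq0 negb_or => /andP [_]; rewrite mulf_eq0 negb_or => /andP [h _].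
  exists (B \o perm_ext sg); apply: contraNneq h => ->; by rewrite ffunE.
case=> A /ffun_neq0 [ij0 nz0].
have [c nzc] := reduce_units d0 ml nz0.
have cinj : forall i1 i2 : 'I_k, c i1 = c i2 -> i1 = i2.
  move=> i1 i2 e; apply/eqP; apply: contraT => ne.
  by move: nzc; rewrite (noninj_zero ij0 ch0 ml asf ne e) eqxx.
pose N := (d ^ 2)%N.
pose s1 := [seq c i | i <- iota 0 k].
pose s := s1 ++ [seq x <- enum {: 'I_d * 'I_d} | x \notin s1].
have s1inj : {in iota 0 k &, injective c}.
  move=> i1 i2; rewrite !mem_iota !add0n => /andP[_ h1] /andP[_ h2] e.
  by have := cinj (Ordinal h1) (Ordinal h2) e => /(congr1 val).
have us : uniq s.
  rewrite cat_uniq map_inj_in_uniq // iota_uniq filter_uniq ?enum_uniq // andbT /=.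
  by apply/hasPn => x; rewrite mem_filter => /andP [].
have ss : size s = N.
  have sT : s =i enum {: 'I_d * 'I_d}.
    by move=> x; rewrite mem_cat mem_filter mem_enum andbT orbN.
  rewrite (perm_size (uniq_perm us (enum_uniq _) sT)) -cardE card_prod card_ord.
  by rewrite /N mulnn.
pose u0 := c 0%N.
pose tau i := nth u0 s i.
have tau_c : forall i, (i < k)%N -> tau i = c i.
  move=> i ik; rewrite /tau nth_cat size_map size_iota ik (nth_map 0%N) ?size_iota //.
  by rewrite nth_iota.
have tau_inj : forall i1 i2, (i1 < N)%N -> (i2 < N)%N -> tau i1 = tau i2 -> i1 = i2.
  move=> i1 i2 h1 h2 e; apply/eqP; rewrite -(nth_uniq u0 _ _ us) ?ss //.
  by apply/eqP.
pose B i := dl F (tau i).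
pose ij : {ffun 'I_(n + (N - k)) -> 'I_d * 'I_d} :=
  [ffun t => match split t with inl a => ij0 a | inr j => tau (k + j)%N end].
have ijl : [ffun t => ij (lshift (N - k) t)] = ij0.
  apply/ffunP => t; rewrite !ffunE.
  by have -> : split (lshift (N - k) t) = inl t := unsplitK (inl t).
have ijr : forall j, ij (rshift n j) = tau (k + j)%N.
  move=> j; rewrite ffunE.
  by have -> : split (rshift n j) = inr j := unsplitK (inr j).
have prod_fix : forall sg : 'S_N,
   \prod_(j < N - k) B (perm_ext sg (k + j)) (ij (rshift n j)).1 (ij (rshift n j)).2
   = (@fixes k N sg)%:R.
  move=> sg; rewrite -prod_bool; apply: eq_bigr => j _; rewrite ijr /B dlE.
  have kj : (k + j < N)%N by have := ltn_ord j; lia.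
  have -> : (tau (perm_ext sg (k + j)) == tau (k + j)%N) = (perm_ext sg (k + j) == (k + j)%N) => //.
  apply/idP/idP => [/eqP e|/eqP -> //]; apply/eqP; apply: tau_inj e => //.
  by rewrite (perm_ext_lt _ kj).
have fB : eval_tpoly B f ij0 = eval_tpoly (fun i => dl F (c i)) f ij0.
  by rewrite (eval_ext_ml (A := B) (A' := fun i => dl F (c i)) ml) // => i ik; rewrite /B tau_c.
exists B; apply: (contraNneq _ (_ : eval_tpoly B (Phi d k f) ij != 0)) => [->|]; first by rewrite ffunE.
rewrite eval_Phi ijl.
under eq_bigr => sg _ do rewrite prod_fix.
have -> : \sum_(sg : 'S_N) (-1) ^+ odd_perm sg *
    (eval_tpoly (B \o perm_ext sg) f ij0 * (@fixes k N sg)%:R) =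
  \sum_(sg : 'S_N | @fixes k N sg) (-1) ^+ odd_perm sg *
    eval_tpoly (B \o perm_ext sg) f ij0.
  by rewrite [RHS]big_mkcond; apply: eq_bigr => sg _; case: fixes; rewrite ?mulr1 ?mulr0.
rewrite (sum_fixes kN (fun sg => (-1) ^+ odd_perm sg * eval_tpoly (B \o perm_ext sg) f ij0)).
have hs : forall s0 : 'S_k, eval_tpoly (B \o perm_ext s0) f ij0 =
    (-1) ^+ odd_perm s0 * eval_tpoly B f ij0.
  by move=> s0; rewrite -eval_rename (asf s0) evalZ.
under eq_bigr => s0 _ do rewrite odd_ext
   (eval_ext_ml (A := B \o perm_ext (ext kN s0)) (A' := B \o perm_ext s0) ml (fun i _ => congr1 B (perm_ext_ext kN s0 i)))
   hs mulrA -signr_addb addbb expr0 mul1r.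
rewrite sumr_const card_Sn -mulr_natr mulf_eq0 negb_or fB nzc /=.
by rewrite (iffLR (pcharf0P F) ch0) -lt0n fact_gt0.
Qed.
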